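(* Let $G$ and $H$ be cyclically orderable graphs, each with at least two vertices, with $d(G)=d(H)$. Then for any $u\in V(G)$ and $v\in V(H)$, the series composition $G\oplus H$ obtained by gluing $u$ and $v$ is cyclically orderable.
   Context: The density of a connected graph $G$ with at least two vertices is $d(G)=\frac{|E(G)|}{|V(G)|-1}$. A cyclic base ordering (CBO) of a connected graph $G$ is a bijection $\mathcal{O}:E(G)\to\{1,\dots,|E(G)|\}$ such that for every $i\in\{1,\dots,|E(G)|\}$ the edges $\mathcal{O}^{-1}(i),\dots,\mathcal{O}^{-1}(i+|V(G)|-2)$ (indices taken cyclically modulo $|E(G)|$) induce a spanning tree of $G$; $G$ is cyclically orderable if it has a CBO. Given graphs $G$ and $H$ (vertex-disjoint) with $u\in V(G)$ and $v\in V(H)$, the series composition $G\oplus H$ is the graph obtained from the disjoint union of $G$ and $H$ by identifying $u$ and $v$ into a single vertex. *)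

(* Defs.v *)
From HB Require Import structures.
From mathcomp Require Import all_boot all_order all_algebra.
Set Implicit Arguments. Unset Strict Implicit. Unset Printing Implicit Defensive.

(* Finite multigraphs: a finite vertex type, a finite edge type, and an
   endpoint map.  Parallel edges are allowed (loops too; a loop can never
   belong to a spanning tree). *)
Record graph := Graph {
  vert : finType;
  edge : finType;
  ends : edge -> vert * vert }.

Definition adjF (G : graph) (F : {set edge G}) : rel (vert G) :=
  fun x y => [exists e in F, (ends e == (x, y)) || (ends e == (y, x))].

Definition connectedF (G : graph) (F : {set edge G}) : bool :=
  [forall x, forall y, connect (adjF F) x y].

Definition connected_graph (G : graph) : bool := connectedF [set: edge G].

(* (V(G), F) is a spanning tree: connected, and acyclic in the sense that
   deleting any edge of F disconnects its endpoints (minimally connected). *)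
Definition spanning_tree (G : graph) (F : {set edge G}) : bool :=
  connectedF F &&
  [forall e in F, ~~ connect (adjF (F :\ e)) (ends e).1 (ends e).2].

Definition density (G : graph) : rat :=
  (#|edge G|%:R / (#|vert G|.-1)%:R)%R.

Definition window (G : graph) (O : edge G -> 'I_#|edge G|) (i : nat)
  : {set edge G} :=
  [set e | [exists j : 'I_(#|vert G|.-1), val (O e) == (i + j) %% #|edge G|]].

Definition CBO (G : graph) (O : edge G -> 'I_#|edge G|) : Prop :=
  bijective O /\ forall i : 'I_#|edge G|, spanning_tree (window O i).

Definition cyclically_orderable (G : graph) : Prop :=
  connected_graph G /\ exists O, CBO (G:=G) O.

(* Series composition G (+) H gluing u in V(G) and v in V(H):
   vertices are V(G) + V(H) without inr v, and inr v is sent to inl u. *)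
Section Series.
Variables (G H : graph) (u : vert G) (v : vert H).

Definition sc_vert : finType := {x : vert G + vert H | x != inr v}.

Definition sc_glue (x : vert G + vert H) : sc_vert :=
  match insub x with
  | Some y => y
  | None => exist _ (inl u) isT
  end.

Definition sc_ends (e : edge G + edge H) : sc_vert * sc_vert :=
  match e with
  | inl e => (sc_glue (inl (ends e).1), sc_glue (inl (ends e).2))
  | inr e => (sc_glue (inr (ends e).1), sc_glue (inr (ends e).2))
  end.

Definition series_comp : graph :=
  @Graph sc_vert (edge G + edge H)%type sc_ends.
End Series.

(* Main.v *)
Require Import Defs.
From mathcomp Require Import all_boot all_order all_algebra.
From mathcomp Require Import zify.

Section Step.
#[local] Set Default Proof Using "All".
Variables (c : nat -> nat) (N M L K : nat).
Hypotheses (c0 : c 0 = 0) (cmono : forall x, c x <= c x.+1)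
  (cstep : forall x, c x.+1 <= (c x).+1)
  (cN : forall x, c (x + N) = c x + M) (cL : forall x, c (x + L) = c x + K)
  (N_gt0 : 0 < N).

Definition inc t := c t.+1 == (c t).+1.

Lemma c_mono x y : x <= y -> c x <= c y.
Proof.
move=> /subnKC <-; elim: (y - x) => [|k IH]; first by rewrite addn0.
by rewrite addnS; exact: leq_trans IH (cmono _).
Qed.

Lemma ivt s k y : c s <= y < c (s + k) -> exists2 j, j < k & (c (s+j) = y /\ inc (s+j)).
Proof.
elim: k => [|k IH] /andP [h1 h2]; first by rewrite addn0 in h2; move: (leq_trans h2 h1); rewrite ltnn.
case: (ltnP y (c (s + k))) => hy.
  by case: IH => [|j jk hj]; [rewrite h1 hy | exists j => //; exact: ltnW].
exists k => //.
have e1 : y = c (s + k).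
  apply/eqP; rewrite eqn_leq hy andbT.
  by rewrite -ltnS; apply: leq_trans h2 _; rewrite addnS cstep.
split=> //; rewrite /inc; apply/eqP; apply/eqP; rewrite eqn_leq cstep /=.
by rewrite -e1 -addnS.
Qed.

Lemma cNk x k : c (x + k * N) = c x + k * M.
Proof.
elim: k => [|k IH]; first by rewrite !mul0n !addn0.
by rewrite !mulSn (addnC N) addnA cN IH (addnC M) addnA.
Qed.

Lemma c_mod x : c x = c (x %% N) + x %/ N * M.
Proof. by rewrite {1}(divn_eq x N) addnC cNk. Qed.

Lemma inc_mod x : inc (x %% N) = inc x.
Proof.
rewrite {2}(divn_eq x N) addnC /inc -addSn !cNk -addSn eqn_add2r //.
Qed.

Lemma inc_lt t : t < N -> inc t -> c t < M.
Proof.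
move=> tN /eqP e; have := @c_mono _ _ tN; rewrite e.
by have := cN 0; rewrite add0n c0 add0n => ->.
Qed.

Lemma inc_modM t : inc t -> c t %% M = c (t %% N).
Proof.
move=> it; rewrite c_mod addnC modnMDl modn_small //.
by apply: inc_lt; [rewrite ltn_pmod | rewrite inc_mod].
Qed.

Lemma inc_inj t t' : inc t -> inc t' -> c t = c t' -> t = t'.
Proof.
wlog: t t' / t <= t'.
  move=> W i1 i2 e; case: (leqP t t') => h; first exact: W.
  by apply/esym/W => //; exact: ltnW.
rewrite leq_eqVlt => /orP [/eqP //|lt] /eqP i1 _ e.
by have := @c_mono _ _ lt; rewrite i1 e ltnn.
Qed.

Lemma window_iff s y : y < M ->
  (exists2 j, j < L & inc (s+j) /\ c ((s+j) %% N) = y) <->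
  (exists2 j, j < K & (c s + j) %% M = y).
Proof.
move=> yM; split.
  move=> [j jL [ij cj]].
  have le1 : c s <= c (s + j) by apply: c_mono; rewrite leq_addr.
  exists (c (s + j) - c s).
    rewrite ltn_subLR //; have := @c_mono _ _ (leq_add (leqnn s) jL).
    by rewrite cL -(eqP ij) addnS.
  by rewrite subnKC // inc_modM.
move=> [j jK e].
have [k kL [ck ik]] : exists2 k, k < L & (c (s+k) = c s + j /\ inc (s+k)).
  by apply: ivt; rewrite leq_addr cL ltn_add2l.
exists k => //; split => //.
by rewrite -inc_modM // ck.
Qed.

End Step.

Lemma connect_map (T1 T2 : finType) (e1 : rel T1) (e2 : rel T2) (f : T1 -> T2) :
  (forall x y, e1 x y -> connect e2 (f x) (f y)) ->
  forall x y, connect e1 x y -> connect e2 (f x) (f y).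
Proof.
move=> H x y /connectP [p]; elim: p x => [|z p IH] x /=.
  by move=> _ ->; exact: connect0.
by case/andP => exz pz ly; apply: connect_trans (H _ _ exz) (IH _ pz ly).
Qed.

Section SC.
Variables (G H : graph) (u : vert G) (v : vert H).
Let S := series_comp u v.
Definition phiG (x : vert G) : vert S := sc_glue u v (inl x).
Definition phiH (y : vert H) : vert S := sc_glue u v (inr y).
Definition psiG (w : vert S) : vert G :=
  match val w with inl x => x | inr _ => u end.
Definition psiH (w : vert S) : vert H :=
  match val w with inl _ => v | inr y => y end.

Lemma val_glue x : val (sc_glue u v x) = if x != inr v then x else inl u.
Proof.
rewrite /sc_glue; case: insubP => [y -> -> //|/negbTE -> //].
Qed.

Lemma psiG_phiG x : psiG (phiG x) = x.
Proof. by rewrite /psiG /phiG val_glue. Qed.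
Lemma psiH_phiH y : psiH (phiH y) = y.
Proof. rewrite /psiH /phiH val_glue; case: eqP => [[->]|] //. Qed.
Lemma psiG_phiH y : psiG (phiH y) = u.
Proof. rewrite /psiG /phiH val_glue; by case: eqP. Qed.
Lemma psiH_phiG x : psiH (phiG x) = v.
Proof. by rewrite /psiH /phiG val_glue. Qed.
Lemma phiGH : phiG u = phiH v.
Proof. by apply: val_inj; rewrite /phiG /phiH !val_glue eqxx. Qed.

Lemma endsG' g : @ends S (inl g) = (phiG (ends g).1, phiG (ends g).2).
Proof. by []. Qed.
Lemma endsH' h : @ends S (inr h) = (phiH (ends h).1, phiH (ends h).2).
Proof. by []. Qed.

Lemma vertS (w : vert S) : (exists x, w = phiG x) \/ (exists y, w = phiH y).
Proof.
case: w => [[x|y] hy].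
  by left; exists x; apply: val_inj; rewrite /phiG val_glue.
by right; exists y; apply: val_inj; rewrite /phiH val_glue /= hy.
Qed.

Variable F : {set edge S}.
Let FG := [set g | inl g \in F].
Let FH := [set h | inr h \in F].

Lemma adj_liftG x y : adjF FG x y -> adjF F (phiG x) (phiG y).
Proof.
case/existsP => g /andP [gF he]; apply/existsP; exists (inl g).
rewrite inE in gF; rewrite gF endsG' /=.
by case/orP: he => /eqP -> /=; rewrite eqxx ?orbT.
Qed.
Lemma adj_liftH x y : adjF FH x y -> adjF F (phiH x) (phiH y).
Proof.
case/existsP => g /andP [gF he]; apply/existsP; exists (inr g).
rewrite inE in gF; rewrite gF endsH' /=.
by case/orP: he => /eqP -> /=; rewrite eqxx ?orbT.
Qed.

Lemma sc_connected : connectedF FG -> connectedF FH -> connectedF F.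
Proof.
move=> /forallP cG /forallP cH.
have LG x y : connect (adjF F) (phiG x) (phiG y).
  apply: (@connect_map _ _ (adjF FG)) => [a b ab|]; first by apply: connect1; exact: adj_liftG.
  exact: (forallP (cG x)).
have LH x y : connect (adjF F) (phiH x) (phiH y).
  apply: (@connect_map _ _ (adjF FH)) => [a b ab|]; first by apply: connect1; exact: adj_liftH.
  exact: (forallP (cH x)).
apply/forallP => w1; apply/forallP => w2.
case: (vertS w1) => [[x ->]|[x ->]]; case: (vertS w2) => [[y ->]|[y ->]] //.
  by apply: connect_trans (LG x u) _; rewrite phiGH.
by apply: connect_trans (LH x v) _; rewrite -phiGH.
Qed.

Lemma sc_tree : spanning_tree FG -> spanning_tree FH -> spanning_tree F.
Proof.
case/andP => cG /forall_inP tG; case/andP => cH /forall_inP tH.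
rewrite /spanning_tree sc_connected //=; apply/forall_inP => e eF.
case: e eF => [g|h] eF; apply/negP => C.
- have gF : g \in FG by rewrite inE.
  apply: (negP (tG g gF)); rewrite -[(ends g).1]psiG_phiG -[(ends g).2]psiG_phiG.
  move: C; rewrite /= ; apply: connect_map => a b.
  case/existsP => e' /andP [/setD1P [ne e'F] he].
  case: e' ne e'F he => [g'|h'] ne e'F he.
    apply: connect1; apply/existsP; exists g'.
    rewrite !inE e'F andbT; apply/andP; split; first by apply: contra ne => /eqP ->.
    rewrite endsG' in he.
    by case/orP: he => /eqP [<- <-]; rewrite !psiG_phiG; case: (ends g') => ? ? /=; rewrite eqxx ?orbT.
  rewrite endsH' in he.
  by case/orP: he => /eqP [<- <-]; rewrite !psiG_phiH connect0.
- have hF : h \in FH by rewrite inE.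
  apply: (negP (tH h hF)); rewrite -[(ends h).1]psiH_phiH -[(ends h).2]psiH_phiH.
  move: C; rewrite /=; apply: connect_map => a b.
  case/existsP => e' /andP [/setD1P [ne e'F] he].
  case: e' ne e'F he => [g'|h'] ne e'F he.
    rewrite endsG' in he.
    by case/orP: he => /eqP [<- <-]; rewrite !psiH_phiG connect0.
  apply: connect1; apply/existsP; exists h'.
  rewrite !inE e'F andbT; apply/andP; split; first by apply: contra ne => /eqP ->.
  rewrite endsH' in he.
  by case/orP: he => /eqP [<- <-]; rewrite !psiH_phiH; case: (ends h') => ? ? /=; rewrite eqxx ?orbT.
Qed.
End SC.

Lemma dens_eq (m K m' K' : nat) : 0 < K -> 0 < K' ->
  (m%:R / K%:R = m'%:R / K'%:R :> rat)%R -> m * K' = m' * K.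
Proof.
move=> hK hK' /eqP; rewrite GRing.eqr_div ?Num.Theory.pnatr_eq0 -?lt0n //.
by rewrite -!GRing.natrM Num.Theory.eqr_nat => /eqP.
Qed.

Lemma edges_gt0 (G : graph) : 1 < #|vert G| -> connected_graph G -> 0 < #|edge G|.
Proof.
case/card_gt1P => x [y [_ _ xy]] /forallP /(_ x) /forallP /(_ y) /connectP [[|z p]] /=.
  by move=> _ yx; rewrite yx eqxx in xy.
case/andP => /existsP [e _] _ _; apply/card_gt0P; by exists e.
Qed.

Theorem mainTheorem6 (G H : graph) (u : vert G) (v : vert H) :
  1 < #|vert G| -> 1 < #|vert H| ->
  cyclically_orderable G -> cyclically_orderable H ->
  density G = density H ->
  cyclically_orderable (series_comp u v).
Proof.
move=> nG nH [cG [OG [bG wG]]] [cH [OH [bH wH]]] dGH.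
set S := series_comp u v.
have mG := edges_gt0 _ nG cG; have mH := edges_gt0 _ nH cH.
set m := #|edge G| in OG bG wG mG dGH *.
set m' := #|edge H| in OH bH wH mH dGH *.
set K := #|vert G|.-1 in wG dGH *.
set K' := #|vert H|.-1 in wH dGH *.
have KK : m * K' = m' * K.
  by apply: dens_eq dGH; rewrite /K /K' -ltnS prednK ?(ltnW nG) ?(ltnW nH).
set N := #|edge S|.
have hN : N = m + m' by rewrite /N /S /= card_sum.
set L := #|vert S|.-1.
have hL : L = K + K'.
  rewrite /L /S /= /sc_vert card_sig.
  have := cardC1 (inr v : vert G + vert H); rewrite card_sum.
  rewrite /K /K'; move: nG nH; rewrite /in_mem /=.
  have -> : #|[pred x : vert G + vert H | x != inr v]| = #|predC1 (inr v : vert G + vert H)|.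
    by apply: eq_card.
  lia.
have N_gt0 : 0 < N by rewrite hN; lia.
pose c x := x * m %/ N.
pose h x := x - c x.
have c0 : c 0 = 0 by rewrite /c mul0n div0n.
have cmono : forall x, c x <= c x.+1 by move=> x; apply: leq_div2r; rewrite leq_mul2r leqnSn orbT.
have cstep : forall x, c x.+1 <= (c x).+1.
  move=> x; rewrite /c -[(_ %/ N).+1]add1n -(divnMDl 1 _ N_gt0) mul1n.
  by apply: leq_div2r; rewrite mulSn leq_add2r hN leq_addr.
have cN : forall x, c (x + N) = c x + m.
  by move=> x; rewrite /c mulnDl addnC (mulnC N) divnMDl // addnC.
have cL : forall x, c (x + L) = c x + K.
  move=> x; rewrite /c mulnDl.
  have -> : L * m = K * N by rewrite hL hN; lia.
  by rewrite addnC divnMDl // addnC.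
have cle : forall x, c x <= x.
  move=> x; rewrite /c -{2}(mulnK x N_gt0); apply: leq_div2r.
  by rewrite leq_mul2l hN leq_addr orbT.
have h0 : h 0 = 0 by rewrite /h c0.
have hmono : forall x, h x <= h x.+1.
  by move=> x; rewrite /h; have := cstep x; have := cle x; lia.
have hstep : forall x, h x.+1 <= (h x).+1.
  by move=> x; rewrite /h; have := cmono x; have := cle x; lia.
have hN' : forall x, h (x + N) = h x + m'.
  by move=> x; rewrite /h cN; have := cle x; lia.
have hL' : forall x, h (x + L) = h x + K'.
  by move=> x; rewrite /h cL; have := cle x; lia.
have inch : forall t, inc h t = ~~ inc c t.
  move=> t; rewrite /inc /h; have := cstep t; have := cmono t; have := cle t.
  have := cle t.+1; case: eqP => /=; lia.
pose incG_lt := @inc_lt c N m L K c0 cmono cstep cN cL N_gt0.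
pose incG_inj := @inc_inj c N m L K c0 cmono cstep cN cL N_gt0.
pose incG_mod := @inc_mod c N m L K c0 cmono cstep cN cL N_gt0.
pose WG := @window_iff c N m L K c0 cmono cstep cN cL N_gt0.
pose incH_lt := @inc_lt h N m' L K' h0 hmono hstep hN' hL' N_gt0.
pose incH_inj := @inc_inj h N m' L K' h0 hmono hstep hN' hL' N_gt0.
pose incH_mod := @inc_mod h N m' L K' h0 hmono hstep hN' hL' N_gt0.
pose WH := @window_iff h N m' L K' h0 hmono hstep hN' hL' N_gt0.
case: bG => OGi OGK OGiK; case: bH => OHi OHK OHiK.
pose og0 : 'I_m := Ordinal mG.
pose oh0 : 'I_m' := Ordinal mH.
pose Q : 'I_N -> edge S := fun t =>
  if inc c t then inl (OGi (insubd og0 (c t))) else inr (OHi (insubd oh0 (h t))).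
have QG : forall (t : 'I_N) g, (Q t == inl g) = inc c t && (c t == val (OG g)).
  move=> t g; rewrite /Q; case: ifP => it //=.
  apply/eqP/eqP => [[<-]|ce].
    by rewrite OGiK val_insubd (incG_lt _ (ltn_ord t) it).
  congr inl; rewrite -[g]OGK; congr OGi; apply: val_inj.
  by rewrite val_insubd (incG_lt _ (ltn_ord t) it).
have QH : forall (t : 'I_N) g, (Q t == inr g) = inc h t && (h t == val (OH g)).
  move=> t g; rewrite /Q inch; case: ifP => it //=.
  have it' : inc h t by rewrite inch it.
  apply/eqP/eqP => [[<-]|ce].
    by rewrite OHiK val_insubd (incH_lt _ (ltn_ord t) it').
  congr inr; rewrite -[g]OHK; congr OHi; apply: val_inj.
  by rewrite val_insubd (incH_lt _ (ltn_ord t) it').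
have Qinj : injective Q.
  move=> t1 t2 e; apply: val_inj.
  case E: (Q t2) e => [g|g] /eqP e; move: (e) (eqxx (Q t2)); rewrite {2}E.
  - rewrite !QG => /andP [i1 /eqP c1] /andP [i2 /eqP c2].
    by apply: incG_inj => //; rewrite c1 c2.
  - rewrite !QH => /andP [i1 /eqP c1] /andP [i2 /eqP c2].
    by apply: incH_inj => //; rewrite c1 c2.
have bQ : bijective Q.
  by apply: (@inj_card_bij _ _ Q Qinj); rewrite card_ord.
case: bQ => O QO OQ.
have OQ' : forall e k (hk : k < N), (val (O e) == k) = (e == Q (Ordinal hk)).
  move=> e k hk; apply/eqP/eqP => [E|->]; last by rewrite QO.
  have E' : O e = Ordinal hk by apply: val_inj.
  by rewrite -E' OQ.
split.
  rewrite /connected_graph; apply: sc_connected.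
    have -> : [set g | inl g \in [set: edge S]] = [set: edge G] by apply/setP => g; rewrite !inE.
    exact: cG.
  have -> : [set g | inr g \in [set: edge S]] = [set: edge H] by apply/setP => g; rewrite !inE.
  exact: cH.
exists O; split; first by exists Q.
move=> i; apply: sc_tree.
  have -> : [set g | inl g \in window O i] = window OG (Ordinal (ltn_pmod (c i) mG)).
    apply/setP => g; rewrite !inE; apply/existsP/existsP => [[j Hj]|[j Hj]].
      rewrite (OQ' _ _ (ltn_pmod (i + j) N_gt0)) eq_sym QG /= incG_mod in Hj.
      case/andP: Hj => ij /eqP cj.
      have [j' j'K e] : exists2 j', j' < K & (c i + j') %% m = OG g.
        by apply/(WG i (OG g) (ltn_ord _)); exists j.
      by exists (Ordinal j'K); rewrite /= modnDml e.
    have [k kL [ik ck]] : exists2 k, k < L & inc c (i+k) /\ c ((i+k) %% N) = OG g.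
      by apply/(WG i (OG g) (ltn_ord _)); exists j => //; rewrite (eqP Hj) modnDml.
    exists (Ordinal kL).
    by rewrite /= (OQ' _ _ (ltn_pmod (i + k) N_gt0)) eq_sym QG /= incG_mod ik ck eqxx.
  exact: wG.
have -> : [set g | inr g \in window O i] = window OH (Ordinal (ltn_pmod (h i) mH)).
  apply/setP => g; rewrite !inE; apply/existsP/existsP => [[j Hj]|[j Hj]].
    rewrite (OQ' _ _ (ltn_pmod (i + j) N_gt0)) eq_sym QH /= incH_mod in Hj.
    case/andP: Hj => ij /eqP cj.
    have [j' j'K e] : exists2 j', j' < K' & (h i + j') %% m' = OH g.
      by apply/(WH i (OH g) (ltn_ord _)); exists j.
    by exists (Ordinal j'K); rewrite /= modnDml e.
  have [k kL [ik ck]] : exists2 k, k < L & inc h (i+k) /\ h ((i+k) %% N) = OH g.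
    by apply/(WH i (OH g) (ltn_ord _)); exists j => //; rewrite (eqP Hj) modnDml.
  exists (Ordinal kL).
  by rewrite /= (OQ' _ _ (ltn_pmod (i + k) N_gt0)) eq_sym QH /= incH_mod ik ck eqxx.
exact: wH.
Qed.
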